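(* For all $n,m\in\mathbb{N}$, \[ \sum_{j=0}^{n}\sum_{i=0}^{j}\frac{\binom{2n+3+m}{i}}{\binom{2n+1}{j}}=2^{m}(n+1)\left(H_{n+1}-\sum_{k=1}^{m}\frac{1}{2^{k-1}k}\left(\frac{\binom{2n+2+k}{n+1}}{\binom{2n+2}{n+1}}-1\right)\right). \]
   Context: $H_n=\sum_{k=1}^{n}\frac1k$ is the $n$-th harmonic number. Empty sums are $0$. *)

(* Defs.v *)
From HB Require Import structures.
From mathcomp Require Import all_boot all_order all_algebra.
Set Implicit Arguments. Unset Strict Implicit. Unset Printing Implicit Defensive.
Import Order.TTheory GRing.Theory Num.Theory.
Local Open Scope ring_scope.

Definition harmonic (n : nat) : rat := \sum_(1 <= k < n.+1) (k%:R)^-1.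

(* Main.v *)
Require Import Defs.
From HB Require Import structures.
From mathcomp Require Import all_boot all_order all_algebra.
From mathcomp Require Import ring lra zify.
Import Order.TTheory GRing.Theory Num.Theory.
Local Open Scope ring_scope.

Definition Sm (A j : nat) : rat := \sum_(0 <= i < j) ('C(A, i))%:R.

Lemma Sm0 A : Sm A 0 = 0.
Proof. by rewrite /Sm big_geq. Qed.

Lemma SmS A j : Sm A j.+1 = Sm A j + ('C(A, j))%:R.
Proof. by rewrite /Sm big_nat_recr. Qed.

Lemma Sm_pascal A j : Sm A.+1 j.+1 = Sm A j.+1 + Sm A j.
Proof.
elim: j => [|j IH]; first by rewrite !SmS !Sm0 !bin0 !add0r addr0.
rewrite SmS IH (SmS A j.+1) binS natrD SmS; ring.
Qed.

Lemma Sm_pascal' A j : Sm A.+1 j = Sm A j + Sm A j.-1.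
Proof. by case: j => [|j] /=; [rewrite !Sm0 addr0 | rewrite Sm_pascal]. Qed.

Lemma binN0 N k : (k <= N)%N -> ('C(N, k))%:R != 0 :> rat.
Proof. by move=> h; rewrite pnatr_eq0 -lt0n bin_gt0. Qed.

Lemma Tsum N M k : (k <= N)%N ->
  \sum_(0 <= j < k) (('C(N + M.+2, j))%:R / ('C(N, j))%:R : rat)
  = (((N.+1)%:R - k%:R) * ('C(N + M.+2, k))%:R / ('C(N, k))%:R - (N.+1)%:R) / (M.+1)%:R.
Proof.
elim: k => [|k IH] hk.
  rewrite big_geq // !bin0 subr0 divr1 mulr1 subrr mul0r //.
rewrite big_nat_recr //= IH; last by apply: ltnW.
have h1 := congr1 (fun x => x%:R : rat) (mul_bin_left N k).
have h2 := congr1 (fun x => x%:R : rat) (mul_bin_left (N + M.+2) k).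
rewrite /= !natrM !natrB in h1 h2; last 2 first.
- lia.
- lia.
have c0 := @binN0 N k (ltnW hk).
have c1 := @binN0 N k.+1 hk.
set cn := ('C(N, k))%:R : rat in h1 c0 *.
set cn1 := ('C(N, k.+1))%:R : rat in h1 c1 *.
set ca := ('C(N + M.+2, k))%:R : rat in h2 *.
set ca1 := ('C(N + M.+2, k.+1))%:R : rat in h2 *.
have hNk : (k%:R + 1 <= N%:R :> rat) by rewrite natr1 ler_nat.
have e1 : cn1 = (N%:R - k%:R) * cn / (k%:R + 1).
  rewrite -h1 natr1; field; by rewrite addrC natr1 pnatr_eq0.
have e2 : ca1 = ((N + M.+2)%:R - k%:R) * ca / (k%:R + 1).
  rewrite -h2 natr1; field; by rewrite addrC natr1 pnatr_eq0.
rewrite e2 e1 -!natr1 !natrD -!natr1.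
field.
have k0 := ler0n rat k; have M0 := ler0n rat M.
apply/and4P; split; [| | exact c0 |]; apply: lt0r_neq0; lra.
Qed.

Lemma seq_lemma (a s : nat -> rat) K : s 0%N = 0 ->
  \sum_(0 <= j < K.+1) a j * (s j.+1 + 2 * s j + s j.-1)
  = \sum_(0 <= k < K) (a k + 2 * a k.+1 + a k.+2) * s k.+1
    + a K * s K.+1 - a K.+1 * s K.
Proof.
move=> s0; elim: K => [|K IH].
  by rewrite big_nat1 big_geq //= s0; ring.
by rewrite big_nat_recr //= IH big_nat_recr //=; ring.
Qed.

Lemma bin2_rel N j : (j <= N)%N ->
  ((N.+2 - j) * (N.+1 - j) * 'C(N.+2, j) = N.+2 * N.+1 * 'C(N, j))%N.
Proof.
move=> hj.
have h1 := mul_bin_down N.+2 j.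
have h2 := mul_bin_down N.+1 j.
rewrite /= in h1 h2.
by rewrite mulnAC -h1 -mulnA [('C(N.+1, j) * _)%N]mulnC -h2 mulnA.
Qed.

Definition aa (N j : nat) : rat :=
  ((N.+2 - j) * (N.+1 - j))%N%:R / ('C(N, j))%:R.

Lemma inv_bin2 N j (X : rat) : (j <= N)%N ->
  X / ('C(N.+2, j))%:R = X * aa N j / ((N.+1)%:R * (N.+2)%:R).
Proof.
move=> hj.
have h := congr1 (fun x => x%:R : rat) (@bin2_rel N j hj).
rewrite /= !natrM in h.
have c0 := @binN0 N j hj.
have c2 : ('C(N.+2, j))%:R != 0 :> rat by apply: binN0; lia.
rewrite /aa natrM.
have e : ('C(N.+2, j))%:R = (N.+2)%:R * (N.+1)%:R * ('C(N, j))%:R /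
     ((N.+2 - j)%N%:R * (N.+1 - j)%N%:R) :> rat.
  rewrite -h; field.
  rewrite !pnatr_eq0; apply/andP; split; apply/eqP; lia.
rewrite e; field.
rewrite c0 !pnatr_eq0 /=.
have N0 := ler0n rat N.
apply/and4P; split; try (apply: lt0r_neq0; lra); apply/eqP; lia.
Qed.

Lemma c_ident N k : (k.+2 <= N)%N ->
  aa N k + 2 * aa N k.+1 + aa N k.+2 = ((N.+2 * N.+3)%N)%:R / ('C(N, k))%:R.
Proof.
move=> hk.
have h1 := congr1 (fun x => x%:R : rat) (mul_bin_left N k).
have h2 := congr1 (fun x => x%:R : rat) (mul_bin_left N k.+1).
rewrite /= !natrM !natrB in h1 h2; try lia.
have c0 := @binN0 N k ltac:(lia).
have c1 := @binN0 N k.+1 ltac:(lia).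
have c2 := @binN0 N k.+2 ltac:(lia).
set cn := ('C(N, k))%:R : rat in h1 c0 *.
set cn1 := ('C(N, k.+1))%:R : rat in h1 h2 c1 *.
set cn2 := ('C(N, k.+2))%:R : rat in h2 c2 *.
have k0 := ler0n rat k.
have hNk : (k%:R + 2 <= N%:R :> rat).
  have : ((k.+2)%:R <= N%:R :> rat) by rewrite ler_nat.
  rewrite -!natr1; lra.
have e1 : cn1 = (N%:R - k%:R) * cn / (k%:R + 1).
  rewrite -h1 -natr1; field; apply: lt0r_neq0; lra.
have e2 : cn2 = (N%:R - (k%:R + 1)) * cn1 / (k%:R + 2).
  rewrite natr1 -h2 -!natr1; field; apply: lt0r_neq0; lra.
rewrite /aa -/cn -/cn1 -/cn2 e2 e1 !natrM !natrB; try lia.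
rewrite -!natr1.
field.
apply/and5P; split; [exact c0| | | |]; apply: lt0r_neq0; lra.
Qed.

Lemma Gstep_gen n N : N = (2*n+1)%N -> (0 < n)%N ->
  \sum_(0 <= j < n.+2) Sm N.+4 j.+1 / ('C(N.+2, j))%:R
  = (N.+3)%:R / (N.+1)%:R * \sum_(0 <= j < n.+1) Sm N.+2 j.+1 / ('C(N, j))%:R + 1.
Proof.
move=> hN hn.
transitivity (\sum_(0 <= j < n.+2) aa N j *
   (Sm N.+2 j.+1 + 2 * Sm N.+2 j + Sm N.+2 j.-1) / ((N.+1)%:R * (N.+2)%:R)).
  apply: eq_big_nat => j /andP [_ hj].
  rewrite inv_bin2; last by lia.
  rewrite [Sm N.+4 _]Sm_pascal' /= !(Sm_pascal' N.+2) /=; ring.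
rewrite -mulr_suml seq_lemma ?Sm0 //.
have hX : \sum_(0 <= k < n.+1) (aa N k + 2 * aa N k.+1 + aa N k.+2) * Sm N.+2 k.+1
   = ((N.+2 * N.+3)%N)%:R * \sum_(0 <= j < n.+1) Sm N.+2 j.+1 / ('C(N, j))%:R.
  rewrite mulr_sumr; apply: eq_big_nat => k /andP [_ hk].
  rewrite c_ident; last by lia.
  ring.
rewrite hX.
have ha : aa N n.+2 = aa N n.+1.
  rewrite /aa.
  have -> : (N.+2 - n.+1 = n.+2)%N by lia.
  have -> : (N.+1 - n.+1 = n.+1)%N by lia.
  have -> : (N.+2 - n.+2 = n.+1)%N by lia.
  have -> : (N.+1 - n.+2 = n)%N by lia.
  have h := congr1 (fun x => x%:R : rat) (mul_bin_left N n.+1).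
  rewrite (_ : (N - n.+1 = n)%N) in h; last by lia.
  rewrite /= !natrM in h.
  have c1 := @binN0 N n.+1 ltac:(lia).
  have c2 := @binN0 N n.+2 ltac:(lia).
  have e : ('C(N, n.+2))%:R = n%:R * ('C(N, n.+1))%:R / (n.+2)%:R :> rat.
    rewrite -h; field; have n0 := ler0n rat n; apply: lt0r_neq0; lra.
  rewrite e !natrM; field.
  have n1 : (1 <= n%:R :> rat) by rewrite ler1n.
  rewrite c1 /=; apply/andP; split; apply: lt0r_neq0; lra.
rewrite ha SmS.
have hb := congr1 (fun x => x%:R : rat) (@bin2_rel N n.+1 ltac:(lia)).
rewrite /= !natrM in hb.
have c1 := @binN0 N n.+1 ltac:(lia).
have hb' : aa N n.+1 * ('C(N.+2, n.+1))%:R = (N.+2)%:R * (N.+1)%:R.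
  rewrite /aa natrM; apply: (mulIf c1); rewrite -hb; field; exact c1.
set G := \sum_(0 <= j < n.+1) _.
set s := Sm N.+2 n.+1.
set a := aa N n.+1.
set c := ('C(N.+2, n.+1))%:R in hb' *.
rewrite -addrA.
have -> : a * (s + c) - a * s = a * c by ring.
rewrite /a /c hb'.
rewrite natrM -!natr1; field.
have N0 := ler0n rat N.
apply/andP; split; apply: lt0r_neq0; lra.
Qed.

Lemma base n : \sum_(0 <= j < n.+1) Sm (2*n+3) j.+1 / ('C(2*n+1, j))%:R
  = (n.+1)%:R * harmonic n.+1.
Proof.
elim: n => [|n IH].
  rewrite /harmonic /Sm !big_nat1 !bin0; by [].
case: n IH => [|n] IH.
  rewrite /harmonic /Sm big_mkord !big_ord_recr /= big_ord0.
  rewrite !big_mkord !big_ord_recr /= !big_ord0 /= big_ltn // big_nat1.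
  by rewrite !bin0 !bin1; field.
rewrite (_ : (2 * n.+2 + 3 = (2 * n.+1 + 1).+4)%N); last by lia.
rewrite (_ : (2 * n.+2 + 1 = (2 * n.+1 + 1).+2)%N); last by lia.
rewrite (_ : (2 * n.+1 + 3 = (2 * n.+1 + 1).+2)%N) in IH; last by lia.
rewrite (@Gstep_gen n.+1 (2 * n.+1 + 1)) // IH.
rewrite /harmonic (big_nat_recr n.+3) //=.
rewrite -/(harmonic n.+2).
rewrite (_ : ((2 * n.+1 + 1).+3 = 2 * n.+3)%N); last by lia.
rewrite (_ : ((2 * n.+1 + 1).+1 = 2 * n.+2)%N); last by lia.
rewrite !natrM -!natr1.
field.
have n0 := ler0n rat n.
apply/andP; split; apply: lt0r_neq0; lra.
Qed.

Lemma mainL n m :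
  \sum_(0 <= j < n.+1) Sm (2*n+3+m) j.+1 / ('C(2*n+1, j))%:R
  = 2 ^+ m * (n.+1)%:R *
    (harmonic n.+1
     - \sum_(1 <= k < m.+1)
         ((2 ^+ k.-1 * k%:R)^-1 *
          ('C(2 * n + 2 + k, n.+1)%:R / 'C(2 * n + 2, n.+1)%:R - 1))).
Proof.
elim: m => [|m IH].
  by rewrite addn0 base big_geq // subr0 expr0 mul1r.
have step : \sum_(0 <= j < n.+1) Sm (2*n+3+m.+1) j.+1 / ('C(2*n+1, j))%:R
  = 2 * \sum_(0 <= j < n.+1) Sm (2*n+3+m) j.+1 / ('C(2*n+1, j))%:R
    - \sum_(0 <= j < n.+1) ('C(2*n+1 + m.+2, j))%:R / ('C(2*n+1, j))%:R.
  rewrite mulr_sumr -sumrB; apply: eq_big_nat => j _.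
  rewrite addnS Sm_pascal SmS.
  rewrite (_ : (2*n+1 + m.+2 = 2*n+3+m)%N); last by lia.
  ring.
rewrite step IH Tsum; last by lia.
rewrite [in RHS]big_nat_recr //=.
rewrite (_ : (2 * n + 2 + m.+1 = 2*n+1 + m.+2)%N); last by lia.
have hc := congr1 (fun x => x%:R : rat) (mul_bin_down (2*n+2) n.+1).
rewrite /= (_ : (2 * n + 2).-1 = 2*n+1)%N in hc; last by lia.
rewrite (_ : (2 * n + 2 - n.+1 = n.+1)%N) in hc; last by lia.
rewrite !natrM in hc.
have c1 := @binN0 (2*n+1) n.+1 ltac:(lia).
have e : ('C(2 * n + 2, n.+1))%:R = 2 * ('C(2*n+1, n.+1))%:R :> rat.
  apply: (@mulfI _ (n.+1)%:R); first by rewrite pnatr_eq0.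
  rewrite -hc (_ : (2 * n + 2 = 2 * n.+1)%N); last by lia.
  rewrite natrM; ring.
rewrite e.
rewrite (_ : ((2 * n + 1).+1 = 2 * n.+1)%N); last by lia.
rewrite exprS !natrM -!natr1.
field.
have m0 := ler0n rat m.
apply/and3P; split; [exact c1 | apply: lt0r_neq0; lra |].
by apply: expf_neq0; apply: lt0r_neq0; lra.
Qed.

Theorem mainTheorem7 (n m : nat) :
  \sum_(0 <= j < n.+1) \sum_(0 <= i < j.+1)
     ('C(2 * n + 3 + m, i)%:R / 'C(2 * n + 1, j)%:R : rat)
  = 2 ^+ m * (n.+1)%:R *
    (harmonic n.+1
     - \sum_(1 <= k < m.+1)
         ((2 ^+ k.-1 * k%:R)^-1 *
          ('C(2 * n + 2 + k, n.+1)%:R / 'C(2 * n + 2, n.+1)%:R - 1))).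
Proof.
rewrite -mainL; apply: eq_bigr => j _.
by rewrite /Sm mulr_suml.
Qed.
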